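(* Let $p$ be prime, $\mathbf k$ algebraically closed of characteristic $p$, $S=\mathbf k[x,y]$, $\mathfrak m=\langle x,y\rangle$, $d\ge1$ and $c\in C(d,2,p)$. Let $\mathcal Z(c,d)=\{0=t_0<t_1<\dots<t_\ell\}$ and let $\delta_{t_0},\dots,\delta_{t_\ell}$ be the type-$c$ segmentation of $d$. Then $$I_{c,d}=\big(\mathfrak m^{\mathrm{Cont}(\delta_{t_0})}\big)^{[p^{t_0}]}\big(\mathfrak m^{\mathrm{Cont}(\delta_{t_1})}\big)^{[p^{t_1}]}\cdots\big(\mathfrak m^{\mathrm{Cont}(\delta_{t_\ell})}\big)^{[p^{t_\ell}]}.$$ In particular, the minimal monomial generators of $I_{c,d}$ are exactly the monomials $x^ay^{d-a}$ with $a=w_0p^{t_0}+w_1p^{t_1}+\cdots+w_\ell p^{t_\ell}$ for integers $0\le w_r\le\mathrm{Cont}(\delta_{t_r})$.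
   Context: Base-$p$ expansion $d=\sum_{j=0}^Md_jp^j$, $0\le d_j\le p-1$, $d_M\ne0$. The carry pattern $(c_1,\dots,c_M)$ of a monomial $x^ay^b$ of degree $d$ is determined by $\sum_{j<\ell}(a_j+b_j)p^j=c_\ell p^\ell+\sum_{j<\ell}d_jp^j$ for $1\le\ell\le M$ ($a_j,b_j$ base-$p$ digits; $c_i=0$ for $i<1$ or $i>M$). $C(d,2,p)$ is the set of carry patterns of degree-$d$ monomials in two variables, ordered componentwise; $I_{c,d}$ is the ideal generated by all degree-$d$ monomials with carry pattern $\le c$. Define $\mathcal Z(c,d)=\{0\le k\le M: c_k=0,\ (c_{k-1},d_{k-1})\ne(0,p-1)\}$, with the convention that $0\in\mathcal Z(c,d)$; write it as $\{0=t_0<t_1<\dots<t_\ell\}$ and set $t_{\ell+1}=M+1$. For $0\le a$ with base-$p$ digits $a_j$, the $c$-segment of $a$ starting at $t_r$ is $a_{[t_r,t_{r+1})}=(a_{t_r},\dots,a_{t_{r+1}-1})$, and its content is $\mathrm{Cont}(a_{[t_r,t_{r+1})})=\sum_{k=t_r}^{t_{r+1}-1}a_kp^{k-t_r}$. Write $\delta_{t_r}=d_{[t_r,t_{r+1})}$; $\{\delta_{t_0},\dots,\delta_{t_\ell}\}$ is the type-$c$ segmentation of $d$. For an ideal $J=\langle f_1,\dots,f_s\rangle$, $J^{[p^e]}=\langle f_1^{p^e},\dots,f_s^{p^e}\rangle$. *)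

(* Defs.v *)
From HB Require Import structures.
From mathcomp Require Import all_boot all_order all_algebra.
From mathcomp Require Import mpoly.
Set Implicit Arguments. Unset Strict Implicit. Unset Printing Implicit Defensive.
Import GRing.Theory.

Section Ideals.
Variable R : comNzRingType.
Local Open Scope ring_scope.

Definition ideal_gen (G : R -> Prop) : R -> Prop :=
  fun f => exists s : seq (R * R),
    (forall u, u \in s -> G u.2) /\ f = \sum_(u <- s) u.1 * u.2.

Definition ideal_unit : R -> Prop := ideal_gen (fun g => g = 1).

Definition ideal_mul (I J : R -> Prop) : R -> Prop :=
  ideal_gen (fun h => exists a b, I a /\ J b /\ h = a * b).

Fixpoint ideal_pow (I : R -> Prop) (n : nat) : R -> Prop :=
  if n is n'.+1 then ideal_mul I (ideal_pow I n') else ideal_unit.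

(* Frobenius-type power J^[q]: ideal generated by q-th powers of elements of J.
   In characteristic p with q = p^e this equals <f_1^q,...,f_s^q> for any
   generating set f_1,...,f_s of J. *)
Definition ideal_frob (J : R -> Prop) (q : nat) : R -> Prop :=
  ideal_gen (fun h => exists f, J f /\ h = f ^+ q).

Local Close Scope ring_scope.
End Ideals.

Unset Implicit Arguments.
Definition xvar (k : fieldType) : {mpoly k[2]} := 'X_(@ord0 1).
Definition yvar (k : fieldType) : {mpoly k[2]} := 'X_(@ord_max 1).

Definition mono (k : fieldType) (i j : nat) : {mpoly k[2]} :=
  (xvar k ^+ i * yvar k ^+ j)%R.

Definition max_ideal (k : fieldType) : {mpoly k[2]} -> Prop :=
  ideal_gen (fun g => g = xvar k \/ g = yvar k).

Definition digit (p n j : nat) : nat := (n %/ p ^ j) %% p.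

Definition topidx (p d : nat) : nat := trunc_log p d.

(* carry pattern of x^a y^(d-a): the number c_l with
   sum_{j<l} (a_j+b_j) p^j = c_l p^l + sum_{j<l} d_j p^j  for 1 <= l <= M,
   and c_l = 0 otherwise *)
Definition carry (p d a l : nat) : nat :=
  if (1 <= l) && (l <= topidx p d) then
    (\sum_(j < l) (digit p a j + digit p (d - a) j) * p ^ j
       - \sum_(j < l) digit p d j * p ^ j) %/ p ^ l
  else 0.

Definition in_carry_patterns (p d : nat) (c : nat -> nat) : Prop :=
  exists a, a <= d /\ forall l, c l = carry p d a l.

Definition carry_le (p d : nat) (c : nat -> nat) (a : nat) : Prop :=
  forall l, carry p d a l <= c l.

Definition Icd (k : fieldType) (p d : nat) (c : nat -> nat) : {mpoly k[2]} -> Prop :=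
  ideal_gen (fun g => exists a, a <= d /\ carry_le p d c a /\ g = mono k a (d - a)).

Definition inZ (p d : nat) (c : nat -> nat) (t : nat) : bool :=
  (t == 0) ||
  [&& 1 <= t, t <= topidx p d, c t == 0 &
      ~~ ((c t.-1 == 0) && (digit p d t.-1 == p.-1))].

Definition Zset (p d : nat) (c : nat -> nat) : seq nat :=
  [seq t <- iota 0 (topidx p d).+1 | inZ p d c t].

Definition nextZ (p d : nat) (c : nat -> nat) (t : nat) : nat :=
  head (topidx p d).+1 [seq u <- Zset p d c | t < u].

Definition Cont (p d : nat) (c : nat -> nat) (t : nat) : nat :=
  \sum_(t <= j < nextZ p d c t) digit p d j * p ^ (j - t).

Definition segprod (k : fieldType) (p d : nat) (c : nat -> nat) : {mpoly k[2]} -> Prop :=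
  foldr (fun t J => ideal_mul (ideal_frob (ideal_pow (max_ideal k) (Cont p d c t)) (p ^ t)) J)
        (ideal_unit (R := {mpoly k[2]})) (Zset p d c).

Definition min_mono_gen (k : fieldType) (I : {mpoly k[2]} -> Prop) (i j : nat) : Prop :=
  I (mono k i j) /\
  forall i' j', i' <= i -> j' <= j -> (i', j') <> (i, j) -> ~ I (mono k i' j').

(* Main.v *)
Require Import Defs.
From HB Require Import structures.
From mathcomp Require Import all_boot all_order all_algebra.
From mathcomp Require Import mpoly.
From mathcomp Require Import zify.
Set Implicit Arguments. Unset Strict Implicit. Unset Printing Implicit Defensive.
Import GRing.Theory.
Open Scope ring_scope.

Section Gen.
Variable R : comNzRingType.
Implicit Types (G H : R -> Prop) (f g : R).

Lemma gen_sub G g : G g -> ideal_gen G g.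
Proof. by move=> Gg; exists [:: (1, g)]; split=> [u|]; rewrite ?big_seq1 ?mul1r // inE => /eqP ->. Qed.

Lemma gen0 G : ideal_gen G 0.
Proof. by exists [::]; rewrite big_nil. Qed.

Lemma genD G f g : ideal_gen G f -> ideal_gen G g -> ideal_gen G (f + g).
Proof.
move=> [s [Hs ->]] [t [Ht ->]]; exists (s ++ t); rewrite big_cat; split=> // u.
by rewrite mem_cat => /orP [/Hs|/Ht].
Qed.

Lemma genM G r f : ideal_gen G f -> ideal_gen G (r * f).
Proof.
move=> [s [Hs ->]]; exists [seq (r * u.1, u.2) | u <- s]; split.
  by move=> u /mapP [v /Hs Hv ->].
by rewrite big_map mulr_sumr; apply: eq_bigr => u _; rewrite mulrA.
Qed.

Definition is_ideal (J : R -> Prop) :=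
  [/\ J 0, (forall f g, J f -> J g -> J (f + g)) & (forall r f, J f -> J (r * f))].

Lemma gen_min G (J : R -> Prop) : is_ideal J -> (forall g, G g -> J g) ->
  forall f, ideal_gen G f -> J f.
Proof.
move=> [J0 JD JM] HG f [s [Hs ->]]; elim: s Hs => [|u s IH] Hs; first by rewrite big_nil.
rewrite big_cons; apply: JD; first by apply: JM; apply: HG; apply: Hs; rewrite inE eqxx.
by apply: IH => v Hv; apply: Hs; rewrite inE Hv orbT.
Qed.

Lemma gen_ideal G : is_ideal (ideal_gen G).
Proof. by split; [apply: gen0 | apply: genD | apply: genM]. Qed.

Lemma gen_ext G H : (forall g, G g -> ideal_gen H g) -> (forall h, H h -> ideal_gen G h) ->
  forall f, ideal_gen G f <-> ideal_gen H f.
Proof. by move=> GH HG f; split; apply: gen_min => //; apply: gen_ideal. Qed.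

Lemma mul_ext (I I' J J' : R -> Prop) : (forall f, I f <-> I' f) -> (forall f, J f <-> J' f) ->
  forall f, ideal_mul I J f <-> ideal_mul I' J' f.
Proof.
move=> HI HJ; apply: gen_ext => h [a [b [Ia [Jb ->]]]]; apply: gen_sub; exists a, b.
  by rewrite -HI -HJ.
by rewrite HI HJ.
Qed.

Lemma frob_ext (I I' : R -> Prop) q : (forall f, I f <-> I' f) ->
  forall f, ideal_frob I q f <-> ideal_frob I' q f.
Proof.
move=> HI; apply: gen_ext => h [a [Ia ->]]; apply: gen_sub; exists a.
  by rewrite -HI. by rewrite HI.
Qed.

Lemma mul_gen G H f : ideal_mul (ideal_gen G) (ideal_gen H) f <->
  ideal_gen (fun h => exists g g', G g /\ H g' /\ h = g * g') f.
Proof.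
apply: gen_ext => h; last first.
  by move=> [g [g' [Gg [Hg' ->]]]]; apply: gen_sub; exists g, g'; split; [apply: gen_sub|split; [apply: gen_sub|]].
move=> [a [b [Ga [Hb ->]]]].
pose J := fun a => ideal_gen (fun h => exists g g', G g /\ H g' /\ h = g * g') (a * b).
apply: (@gen_min G J) Ga.
  split; rewrite /J; first by rewrite mul0r; apply: gen0.
    by move=> f1 g1 Jf Jg; rewrite mulrDl; apply: genD.
  by move=> r f1 Jf; rewrite -mulrA; apply: genM.
move=> g Gg; rewrite /J.
pose J' := fun b => ideal_gen (fun h => exists g g', G g /\ H g' /\ h = g * g') (g * b).
apply: (@gen_min H J') Hb.
  split; rewrite /J'; first by rewrite mulr0; apply: gen0.
    by move=> f1 g1 Jf Jg; rewrite mulrDr; apply: genD.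
  by move=> r f1 Jf; rewrite mulrCA; apply: genM.
by move=> g' Hg'; apply: gen_sub; exists g, g'.
Qed.

Variable p : nat.
Hypothesis charp : p \in [pchar R].

Lemma frobD e (x y : R) : (x + y) ^+ (p ^ e) = x ^+ (p ^ e) + y ^+ (p ^ e).
Proof.
elim: e x y => [|e IH] x y; first by rewrite !expr1.
rewrite expnSr !exprM IH.
by have := pFrobenius_autD_comm charp (mulrC (x ^+ (p ^ e)) (y ^+ (p ^ e))); rewrite !pFrobenius_autE.
Qed.

Lemma frob_gen G e f : ideal_frob (ideal_gen G) (p ^ e) f <->
  ideal_gen (fun h => exists g, G g /\ h = g ^+ (p ^ e)) f.
Proof.
have pp : (0 < p ^ e)%N by rewrite expn_gt0 prime_gt0 // (pcharf_prime charp).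
apply: gen_ext => h; last by move=> [g [Gg ->]]; apply: gen_sub; exists g; split=> //; apply: gen_sub.
move=> [a [Ga ->]].
pose J := fun a => ideal_gen (fun h => exists g, G g /\ h = g ^+ (p ^ e)) (a ^+ (p ^ e)).
apply: (@gen_min G J) Ga.
  split; rewrite /J; first by rewrite expr0n gtn_eqF //; apply: gen0.
    by move=> f1 g1 Jf Jg; rewrite frobD; apply: genD.
  by move=> r f1 Jf; rewrite exprMn; apply: genM.
by move=> g Gg; apply: gen_sub; exists g.
Qed.

End Gen.

Close Scope ring_scope.

Open Scope ring_scope.

Section Mono.
Variable k : fieldType.
Local Notation K := {mpoly k[2]}.

Definition monogen (P : nat -> nat -> Prop) : K -> Prop :=
  fun h => exists i j, P i j /\ h = mono k i j.

Lemma monoM a b a' b' : mono k a b * mono k a' b' = mono k (a + a') (b + b').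
Proof. by rewrite /mono !exprD mulrACA. Qed.

Lemma monoX a b q : mono k a b ^+ q = mono k (a * q) (b * q).
Proof. by rewrite /mono exprMn !exprM. Qed.

Lemma mono00 : mono k 0 0 = 1.
Proof. by rewrite /mono !expr0 mulr1. Qed.

Lemma monogen_ext (P Q : nat -> nat -> Prop) : (forall i j, P i j <-> Q i j) ->
  forall f, ideal_gen (monogen P) f <-> ideal_gen (monogen Q) f.
Proof.
move=> PQ; apply: gen_ext => h [i [j [Pij ->]]]; apply: gen_sub; exists i, j.
  by rewrite -PQ. by rewrite PQ.
Qed.

Lemma unit_mono f : ideal_unit f <-> ideal_gen (monogen (fun i j => i = 0%N /\ j = 0%N)) f.
Proof.
apply: gen_ext => h.
  by move=> ->; apply: gen_sub; exists 0%N, 0%N; rewrite mono00.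
by move=> [i [j [[-> ->] ->]]]; apply: gen_sub; rewrite mono00.
Qed.

Lemma mul_mono (P Q : nat -> nat -> Prop) f :
  ideal_mul (ideal_gen (monogen P)) (ideal_gen (monogen Q)) f <->
  ideal_gen (monogen (fun i j => exists i1 j1 i2 j2,
     P i1 j1 /\ Q i2 j2 /\ i = (i1 + i2)%N /\ j = (j1 + j2)%N)) f.
Proof.
rewrite mul_gen; apply: gen_ext => h.
  move=> [g [g' [[i1 [j1 [P1 ->]]] [[i2 [j2 [Q2 ->]]] ->]]]]; apply: gen_sub.
  exists (i1 + i2)%N, (j1 + j2)%N; rewrite monoM; split=> //.
  by exists i1, j1, i2, j2.
move=> [i [j [[i1 [j1 [i2 [j2 [P1 [Q2 [-> ->]]]]]]] ->]]]; apply: gen_sub.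
exists (mono k i1 j1), (mono k i2 j2); rewrite monoM; split; first by exists i1, j1.
by split=> //; exists i2, j2.
Qed.

Lemma frob_mono (p e : nat) (P : nat -> nat -> Prop) f : p \in [pchar K] ->
  ideal_frob (ideal_gen (monogen P)) (p ^ e) f <->
  ideal_gen (monogen (fun i j => exists i' j',
     P i' j' /\ i = (i' * p ^ e)%N /\ j = (j' * p ^ e)%N)) f.
Proof.
move=> cp; rewrite frob_gen //; apply: gen_ext => h.
  move=> [g [[i [j [Pij ->]]] ->]]; apply: gen_sub; rewrite monoX.
  by exists (i * p ^ e)%N, (j * p ^ e)%N; split=> //; exists i, j.
move=> [i [j [[i' [j' [P' [-> ->]]]] ->]]]; apply: gen_sub; rewrite -monoX.
by exists (mono k i' j'); split=> //; exists i', j'.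
Qed.

Lemma pow_max n f : ideal_pow (max_ideal k) n f <->
  ideal_gen (monogen (fun i j => (i + j)%N = n)) f.
Proof.
elim: n f => [|n IH] f /=.
  rewrite unit_mono; apply: monogen_ext => i j; split; first by move=> [-> ->].
  by move=> /eqP; rewrite addn_eq0 => /andP [/eqP -> /eqP ->].
have mx g : max_ideal k g <-> ideal_gen (monogen (fun i j => (i + j)%N = 1%N)) g.
  apply: gen_ext => h.
    by move=> [->|->]; apply: gen_sub; [exists 1%N, 0%N|exists 0%N, 1%N];
      rewrite /mono /xvar /yvar ?expr0 ?expr1 ?mulr1 ?mul1r.
  move=> [i [j [Hij ->]]]; apply: gen_sub.
  case: i Hij => [|[|i]] Hij.
    by rewrite add0n in Hij; rewrite Hij; right; rewrite /mono expr0 expr1 mul1r.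
    by move: Hij; rewrite add1n => -[->]; left; rewrite /mono expr0 expr1 mulr1.
  by move: Hij; rewrite !addSn.
rewrite (mul_ext mx IH) mul_mono; apply: monogen_ext => i j; split.
  by move=> [i1 [j1 [i2 [j2 [H1 [H2 [-> ->]]]]]]]; rewrite addnACA H1 H2 add1n.
move=> Hij; case: i Hij => [|i] Hij.
  exists 0%N, 1%N, 0%N, j.-1; move: Hij; case: j => // j [<-].
  by rewrite add0n.
by exists 1%N, 0%N, i, j; move: Hij; rewrite addSn => -[<-].
Qed.

End Mono.

Close Scope ring_scope.

Open Scope ring_scope.

Section Mono2.
Variable k : fieldType.
Local Notation K := {mpoly k[2]}.

Lemma pchar_mpoly p : p \in [pchar k] -> p \in [pchar K].
Proof. exact: (rmorph_pchar (@mpolyC 2 k)). Qed.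

Definition mm (i j : nat) : 'X_{1..2} := (U_(@ord0 1) *+ i + U_(@ord_max 1) *+ j)%MM.

Lemma monoE i j : mono k i j = 'X_[mm i j].
Proof. by rewrite /mono /xvar /yvar !mpolyXn mpolyXD. Qed.

Lemma mm0 i j : mm i j ord0 = i.
Proof. by rewrite /mm mnmDE !mulmnE !mnm1E /= mul1n mul0n addn0. Qed.

Lemma mm1 i j : mm i j ord_max = j.
Proof. by rewrite /mm mnmDE !mulmnE !mnm1E /= mul1n mul0n. Qed.

Lemma coefM_nz (r : K) a b i j : (r * mono k a b)@_(mm i j) != 0 ->
  (a <= i)%N /\ (b <= j)%N.
Proof.
rewrite monoE -mcoeff_msupp (perm_mem (msuppMX r (mm a b))) => /mapP [m' _ Hm].
split.
  by have := congr1 (fun m : 'X_{1..2} => m ord0) Hm; rewrite /= mnmDE !mm0 => ->; apply: leq_addr.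
by have := congr1 (fun m : 'X_{1..2} => m ord_max) Hm; rewrite /= mnmDE !mm1 => ->; apply: leq_addr.
Qed.

Lemma mono_in_gen (P : nat -> nat -> Prop) i j : ideal_gen (monogen P) (mono k i j) ->
  exists a b, P a b /\ (a <= i)%N /\ (b <= j)%N.
Proof.
move=> [s [Hs E]].
have : (mono k i j)@_(mm i j) != 0 by rewrite monoE mcoeffX eqxx oner_neq0.
rewrite E; elim: s Hs {E} => [|u s IH] Hs; first by rewrite big_nil mcoeff0 eqxx.
rewrite big_cons mcoeffD.
have [H0|Hn] := eqVneq (u.1 * u.2)@_(mm i j) 0.
  rewrite H0 add0r; apply: IH => v Hv; apply: Hs; by rewrite inE Hv orbT.
move=> _; have := Hs u; rewrite inE eqxx => /(_ isT) [a [b [Pab Eu]]].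
by move: Hn; rewrite Eu => /coefM_nz [Ha Hb]; exists a, b.
Qed.

End Mono2.

Close Scope ring_scope.


Fixpoint Sp (p : nat) (e : nat -> nat) (ts : seq nat) (i j : nat) : Prop :=
  match ts with
  | [::] => i = 0 /\ j = 0
  | t :: ts' => exists i1 j1 i2 j2,
      (exists i' j', i' + j' = e t /\ i1 = i' * p ^ t /\ j1 = j' * p ^ t) /\
      Sp p e ts' i2 j2 /\ i = i1 + i2 /\ j = j1 + j2
  end.

Lemma seg_gen (k : fieldType) p e ts (f : {mpoly k[2]}) : p \in [pchar {mpoly k[2]}]%R ->
  foldr (fun t J => ideal_mul (ideal_frob (ideal_pow (max_ideal k) (e t)) (p ^ t)) J)
        (ideal_unit (R := {mpoly k[2]})) ts f <->
  ideal_gen (@monogen k (Sp p e ts)) f.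
Proof.
move=> cp; elim: ts f => [|t ts IH] f /=; first exact: unit_mono.
have H1 g : ideal_frob (ideal_pow (max_ideal k) (e t)) (p ^ t) g <->
    ideal_gen (@monogen k (fun i j => exists i' j',
     i' + j' = e t /\ i = i' * p ^ t /\ j = j' * p ^ t)) g.
  by rewrite (frob_ext _ (@pow_max k (e t))) frob_mono.
rewrite (mul_ext H1 IH) mul_mono; apply: monogen_ext => i j; split.
  by move=> [i1 [j1 [i2 [j2 [A1 [A2 [-> ->]]]]]]]; exists i1, j1, i2, j2.
by move=> [i1 [j1 [i2 [j2 [A1 [A2 [-> ->]]]]]]]; exists i1, j1, i2, j2.
Qed.

Lemma SpE p e ts i j : Sp p e ts i j <->
  exists w : seq nat, size w = size ts /\
    (forall r, r < size w -> nth 0 w r <= e (nth 0 ts r)) /\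
    i = \sum_(r < size w) nth 0 w r * p ^ nth 0 ts r /\
    j = \sum_(r < size w) (e (nth 0 ts r) - nth 0 w r) * p ^ nth 0 ts r.
Proof.
elim: ts i j => [|t ts IH] i j /=.
  split; first by move=> [-> ->]; exists [::]; rewrite !big_ord0.
  by move=> [[|x w] [//= _ [_ [-> ->]]]]; rewrite !big_ord0.
split.
  move=> [i1 [j1 [i2 [j2 [[i' [j' [Hs [-> ->]]]] [/IH [w [Sw [Bw [-> ->]]]] [-> ->]]]]]]].
  exists (i' :: w); split; first by rewrite /= Sw.
  split; first by case=> [|r] /=; [rewrite -Hs leq_addr | rewrite ltnS; apply: Bw].
  rewrite /= !big_ord_recl /=; split; congr (_ + _).
  by rewrite -Hs addKn.
move=> [[|x w] [//= [Sw] [Bw [-> ->]]]].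
rewrite !big_ord_recl /=.
exists (x * p ^ t), ((e t - x) * p ^ t),
  (\sum_(r < size w) nth 0 w r * p ^ nth 0 ts r),
  (\sum_(r < size w) (e (nth 0 ts r) - nth 0 w r) * p ^ nth 0 ts r).
split.
  exists x, (e t - x); split=> //; rewrite subnKC //; exact: (Bw 0).
split=> //; apply/IH; exists w; split=> //; split=> // r Hr; exact: (Bw r.+1).
Qed.


Section Arith.
Variable p : nat.
Hypothesis p1 : 1 < p.

Lemma pgt0 : 0 < p. Proof. exact: ltnW. Qed.
Lemma pe_gt0 e : 0 < p ^ e. Proof. by rewrite expn_gt0 pgt0. Qed.

Lemma digit_mod n l : digit p n l = n %% p ^ l.+1 %/ p ^ l.
Proof. by rewrite /digit modn_divl expnS. Qed.

Lemma mod_split n t t' : t <= t' -> n %% p ^ t' = (n %% p ^ t' %/ p ^ t) * p ^ t + n %% p ^ t.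
Proof.
move=> le; rewrite {1}(divn_eq (n %% p ^ t') (p ^ t)); congr (_ + _).
by rewrite (modn_dvdm _ (dvdn_exp2l p le)).
Qed.

Lemma digsum n l : \sum_(j < l) digit p n j * p ^ j = n %% p ^ l.
Proof.
elim: l => [|l IH]; first by rewrite big_ord0 expn0 modn1.
by rewrite big_ord_recr /= IH digit_mod addnC -mod_split.
Qed.

Lemma digit_lt n l : digit p n l < p.
Proof. by rewrite /digit ltn_pmod // pgt0. Qed.

Lemma contE d t t' : t <= t' ->
  d %% p ^ t' = (\sum_(t <= j < t') digit p d j * p ^ (j - t)) * p ^ t + d %% p ^ t.
Proof.
move=> le; rewrite -!digsum -!(big_mkord xpredT (fun j => digit p d j * p ^ j)).
rewrite (@big_cat_nat _ _ _ t) //= addnC big_distrl /=; congr (_ + _).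
rewrite !big_nat; apply: eq_bigr => j /andP [tj _].
by rewrite -mulnA -expnD subnK.
Qed.

End Arith.

Lemma carry_aux P A B D : 0 < P -> A < P -> B < P -> (A + B) %% P = D ->
  (A + B - D) %/ P = (D < A).
Proof.
move=> P0 AP BP HAB.
have E := divn_eq (A + B) P; rewrite HAB in E.
have q2 : (A + B) %/ P < 2 by rewrite ltn_divLR //; lia.
have HD : D < P by rewrite -HAB ltn_pmod.
move: E q2; case: ((A + B) %/ P) => [|[|q]] E q2 //.
  rewrite mul0n add0n in E.
  have -> : A + B - D = 0 by lia.
  rewrite div0n; have -> : (D < A) = false by apply/negbTE; rewrite -leqNgt; lia.
  by [].
rewrite mul1n in E.
have -> : A + B - D = P by lia.
rewrite divnn P0; have -> : (D < A) = true by apply/idP; lia.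
by [].
Qed.

Section Carry.
Variables (p d : nat).
Hypothesis p1 : 1 < p.
Local Notation M := (topidx p d).

Lemma d_lt : d < p ^ M.+1.
Proof. exact: trunc_log_ltn. Qed.

Lemma carry_val a l : a <= d -> carry p d a l = (d %% p ^ l < a %% p ^ l).
Proof.
move=> ad; rewrite /carry; case: ifP => [/andP [l1 lM]|H].
  rewrite (eq_bigr _ (fun j _ => mulnDl _ _ _)) big_split /= !digsum //; apply: carry_aux; rewrite ?pe_gt0 ?ltn_pmod ?pe_gt0 //.
  by rewrite modnDm subnKC.
case: l H => [|l] H; first by rewrite expn0 !modn1.
have lM : M < l.+1 by rewrite ltnNge; apply/negP => h; move: H; rewrite h.
have dl : d < p ^ l.+1 by apply: (leq_trans d_lt); rewrite leq_exp2l.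
rewrite !modn_small //; first by rewrite ltnNge ad.
exact: leq_ltn_trans dl.
Qed.

End Carry.

Section Comb.
Variables (p d : nat) (c : nat -> nat).
Hypothesis p1 : 1 < p.
Hypothesis c0 : c 0 = 0.
Local Notation M := (topidx p d).
Local Notation Z := (Zset p d c).
Local Notation T r := (nth M.+1 Z r).

Lemma bigmod n l : M < l -> n <= d -> n %% p ^ l = n.
Proof.
move=> lM nd; rewrite modn_small //; apply: (leq_ltn_trans nd); apply: (leq_trans (d_lt _ p1)).
by rewrite leq_exp2l.
Qed.

Lemma carry_le_iff a : a <= d ->
  carry_le p d c a <-> (forall l, c l = 0 -> a %% p ^ l <= d %% p ^ l).
Proof.
move=> ad; split.
  by move=> H l cl; move: (H l); rewrite carry_val // cl leqn0 eqb0 -leqNgt.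
move=> H l; rewrite carry_val //; case E: (c l) => [|n].
  by rewrite ltnNge H.
by apply: leq_trans (leq_b1 _) _.
Qed.

Lemma memZ t : (t \in Z) = inZ p d c t && (t <= M).
Proof. by rewrite mem_filter mem_iota add0n ltnS. Qed.

Lemma Zred a : a <= d ->
  (forall l, c l = 0 -> a %% p ^ l <= d %% p ^ l) <->
  (forall t, t \in Z -> a %% p ^ t <= d %% p ^ t).
Proof.
move=> ad; split.
  move=> H t; rewrite memZ => /andP [+ _]; rewrite /inZ.
  by case/orP => [/eqP -> | /and4P [_ _ /eqP ct _]]; [rewrite expn0 !modn1 | apply: H].
move=> H; elim=> [|l IH] cl; first by rewrite expn0 !modn1.
case: (leqP l.+1 M) => lM; last by rewrite !bigmod.
case Hz: (inZ p d c l.+1); first by apply: H; rewrite memZ Hz lM.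
move: Hz; rewrite /inZ /= lM cl eqxx /= => /negbFE /andP [/eqP cl' /eqP dg].
rewrite (mod_split p a (leqnSn l)) (mod_split p d (leqnSn l)) -!digit_mod dg.
apply: leq_add; last exact: IH.
rewrite leq_mul2r; apply/orP; right.
by rewrite -ltnS prednK ?(pgt0 p1) ?digit_lt.
Qed.

Lemma Z_sorted : sorted ltn Z.
Proof. by apply: sorted_filter; [exact: ltn_trans | exact: iota_ltn_sorted]. Qed.

Lemma Z_le t : t \in Z -> t <= M.
Proof. by rewrite memZ => /andP []. Qed.

Lemma Z_cons : Z = 0 :: [seq t <- iota 1 M | inZ p d c t].
Proof. by []. Qed.

Lemma filter_nth (s : seq nat) r : sorted ltn s -> r < size s ->
  [seq u <- s | nth 0 s r < u] = drop r.+1 s.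
Proof.
elim: s r => [|x s IH] [|r] //= Hs Hr.
  rewrite ltnn drop0; apply/all_filterP.
  exact: (order_path_min ltn_trans Hs).
have xs : x < nth 0 s r.
  have := order_path_min ltn_trans Hs => /allP; apply; exact: mem_nth.
rewrite ltnNge ltnW //=; apply: IH => //; exact: path_sorted Hs.
Qed.

Lemma nextZ_nth r : r < size Z -> nextZ p d c (nth 0 Z r) = T r.+1.
Proof.
by move=> Hr; rewrite /nextZ filter_nth ?Z_sorted // -nth0 nth_drop addn0.
Qed.

Lemma T0 : T 0 = 0. Proof. by rewrite Z_cons. Qed.
Lemma Tsize : T (size Z) = M.+1. Proof. by rewrite nth_default. Qed.

Lemma T_step r : r < size Z -> T r < T r.+1.
Proof.
move=> Hr; case: (ltnP r.+1 (size Z)) => h.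
  by apply: (sorted_ltn_nth ltn_trans M.+1 Z_sorted).
rewrite (nth_default _ h) ltnS; apply: Z_le; exact: mem_nth.
Qed.

Lemma T_mono s r : s <= r -> r <= size Z -> T s <= T r.
Proof.
elim: r => [|r IH]; first by rewrite leqn0 => /eqP ->.
rewrite leq_eqVlt => /orP [/eqP -> //|]; rewrite ltnS => sr rZ.
apply: leq_trans (IH sr (ltnW rZ)) (ltnW (T_step rZ)).
Qed.

Lemma Cont_rel r : r < size Z ->
  d %% p ^ (T r.+1) = Cont p d c (nth 0 Z r) * p ^ (T r) + d %% p ^ (T r).
Proof.
move=> Hr; rewrite /Cont nextZ_nth // (set_nth_default M.+1 0 Hr).
by apply: contE => //; apply: ltnW; apply: T_step.
Qed.

Lemma sumC s : s <= size Z ->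
  \sum_(r < s) Cont p d c (nth 0 Z r) * p ^ (T r) = d %% p ^ (T s).
Proof.
elim: s => [|s IH] sZ; first by rewrite big_ord0 T0 expn0 modn1.
by rewrite big_ord_recr /= IH ?(ltnW sZ) // addnC -Cont_rel.
Qed.

Lemma sumA n s : s <= size Z ->
  \sum_(r < s) (n %% p ^ (T r.+1) %/ p ^ (T r)) * p ^ (T r) = n %% p ^ (T s).
Proof.
elim: s => [|s IH] sZ; first by rewrite big_ord0 T0 expn0 modn1.
rewrite big_ord_recr /= IH ?(ltnW sZ) // addnC -(mod_split p n) //.
by apply: ltnW; apply: T_step.
Qed.

End Comb.

Section Comb2.
Variables (p d : nat) (c : nat -> nat).
Hypothesis p1 : 1 < p.
Hypothesis c0 : c 0 = 0.
Local Notation M := (topidx p d).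
Local Notation Z := (Zset p d c).
Local Notation T r := (nth M.+1 Z r).
Local Notation C r := (Cont p d c (nth 0 Z r)).

Lemma sumT (w : seq nat) : size w = size Z ->
  \sum_(r < size w) nth 0 w r * p ^ nth 0 Z r = \sum_(r < size Z) nth 0 w r * p ^ T r.
Proof.
move=> Sw; rewrite Sw; apply: eq_bigr => r _.
by rewrite (set_nth_default M.+1 0 (ltn_ord r)).
Qed.

Lemma A_to_B a : a <= d -> (forall t, t \in Z -> a %% p ^ t <= d %% p ^ t) ->
  exists w : seq nat, size w = size Z /\
    (forall r, r < size w -> nth 0 w r <= C r) /\
    a = \sum_(r < size w) nth 0 w r * p ^ nth 0 Z r.
Proof.
move=> ad H.
exists (mkseq (fun r => a %% p ^ (T r.+1) %/ p ^ (T r)) (size Z)).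
have Sw : size (mkseq (fun r => a %% p ^ (T r.+1) %/ p ^ (T r)) (size Z)) = size Z.
  by rewrite size_mkseq.
split=> //; split.
  rewrite Sw => r Hr; rewrite nth_mkseq //.
  have Ha : a %% p ^ (T r.+1) <= d %% p ^ (T r.+1).
    case: (ltnP r.+1 (size Z)) => h; first by apply: H; apply: mem_nth.
    by rewrite (nth_default _ h) !(bigmod (d:=d) p1).
  set P := p ^ T r; set wv := a %% p ^ T r.+1 %/ P; set Cv := C r.
  have Hle : wv * P + a %% P <= Cv * P + d %% P.
    by rewrite /wv /P /Cv -(mod_split p a (ltnW (T_step Hr))) -(Cont_rel Hr).
  have HD : d %% P < P by rewrite ltn_pmod // (pe_gt0 p1).
  rewrite leqNgt; apply/negP => Cw.
  have : Cv.+1 * P <= wv * P by rewrite leq_mul2r Cw orbT.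
  rewrite mulSn; lia.
rewrite sumT //.
rewrite (eq_bigr (fun r : 'I_(size Z) => (a %% p ^ (T r.+1) %/ p ^ (T r)) * p ^ (T r))); last first.
  by move=> r _; rewrite nth_mkseq.
by rewrite sumA // Tsize (bigmod (d:=d) p1).
Qed.

Lemma B_to_A (w : seq nat) : size w = size Z ->
  (forall r, r < size w -> nth 0 w r <= C r) ->
  forall a, a = \sum_(r < size w) nth 0 w r * p ^ nth 0 Z r ->
  a <= d /\ (forall t, t \in Z -> a %% p ^ t <= d %% p ^ t).
Proof.
move=> Sw Bw a Ea.
have key : forall s, s <= size Z ->
    a %% p ^ (T s) = \sum_(r < s) nth 0 w r * p ^ T r /\
    \sum_(r < s) nth 0 w r * p ^ T r <= d %% p ^ (T s).
  move=> s sZ.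
  have Hb : \sum_(r < s) nth 0 w r * p ^ T r <= d %% p ^ (T s).
    rewrite -sumC //; apply: leq_sum => r _.
    by rewrite leq_mul2r Bw ?orbT // Sw (leq_trans (ltn_ord r) sZ).
  split=> //.
  rewrite Ea sumT // -(big_mkord xpredT (fun r => nth 0 w r * p ^ T r)).
  rewrite (@big_cat_nat _ _ _ s) //= big_mkord.
  have Hdv : p ^ T s %| \sum_(s <= i < size Z) nth 0 w i * p ^ T i.
    rewrite big_nat; apply: dvdn_sum => i /andP [si iZ].
    by apply: dvdn_mull; rewrite dvdn_exp2l // T_mono // ltnW.
  rewrite -(divnK Hdv) addnC modnMDl modn_small //.
  apply: leq_ltn_trans Hb _; exact: ltn_pmod _ (pe_gt0 p1 _).
split.
  have [E Hb] := key (size Z) (leqnn _).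
  move: E Hb; rewrite Tsize -sumT // -Ea => E Hb.
  exact: leq_trans Hb (leq_mod _ _).
move=> t tZ; have sZ : index t Z < size Z by rewrite index_mem.
have := key (index t Z) (ltnW sZ); rewrite (set_nth_default 0 M.+1 sZ) nth_index //.
by move=> [-> ->].
Qed.

Lemma AB a : (a <= d /\ carry_le p d c a) <->
  exists w : seq nat, size w = size Z /\
    (forall r, r < size w -> nth 0 w r <= C r) /\
    a = \sum_(r < size w) nth 0 w r * p ^ nth 0 Z r.
Proof.
split.
  move=> [ad H]; apply: A_to_B => //; apply/(Zred c p1) => //; exact/(carry_le_iff c p1).
move=> [w [Sw [Bw ->]]]; have [ad H] := B_to_A Sw Bw (erefl _).
split=> //; apply/(carry_le_iff c p1) => //; apply/(Zred c p1) => //.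
Qed.

Lemma sum_total : \sum_(r < size Z) C r * p ^ nth 0 Z r = d.
Proof.
rewrite (eq_bigr (fun r : 'I_(size Z) => C r * p ^ T r)); last first.
  by move=> r _; rewrite (set_nth_default M.+1 0 (ltn_ord r)).
by rewrite sumC // Tsize (bigmod (d:=d) p1).
Qed.

End Comb2.

Unset Implicit Arguments.


Theorem mainTheorem10 (k : closedFieldType) (p d : nat) (c : nat -> nat) :
  prime p -> (p \in [pchar k])%R -> 1 <= d -> in_carry_patterns p d c ->
  (forall f : {mpoly k[2]}, Icd k p d c f <-> segprod k p d c f) /\
  (forall i j : nat,
     min_mono_gen k (Icd k p d c) i j <->
     (i + j = d /\
      exists w : seq nat,
        size w = size (Zset p d c) /\
        (forall r, r < size w -> nth 0 w r <= Cont p d c (nth 0 (Zset p d c) r)) /\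
        i = \sum_(r < size w) nth 0 w r * p ^ nth 0 (Zset p d c) r)).
Proof.
move=> pp cp d1 [a0 [a0d Hc]].
have p1 : 1 < p := prime_gt1 pp.
have c0 : c 0 = 0 by rewrite Hc /carry.
have cK := pchar_mpoly cp.
pose G := fun i j => (i <= d /\ carry_le p d c i) /\ j = d - i.
have IcdE f : Icd k p d c f <-> ideal_gen (@monogen k G) f.
  apply: gen_ext => h.
    by move=> [a [ad [cl ->]]]; apply: gen_sub; exists a, (d - a).
  by move=> [i [j [[[id cl] ->] ->]]]; apply: gen_sub; exists i.
have Hsum (w : seq nat) : size w = size (Zset p d c) ->
    (forall r, r < size w -> nth 0 w r <= Cont p d c (nth 0 (Zset p d c) r)) ->
    \sum_(r < size w) (Cont p d c (nth 0 (Zset p d c) r) - nth 0 w r) * p ^ nth 0 (Zset p d c) r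
    + \sum_(r < size w) nth 0 w r * p ^ nth 0 (Zset p d c) r = d.
  move=> Sw Bw; rewrite -big_split /=; rewrite -[RHS](sum_total d c p1) -Sw.
  by apply: eq_bigr => r _; rewrite -mulnDl subnK // Bw.
have SpG i j : Sp p (Cont p d c) (Zset p d c) i j <-> G i j.
  rewrite SpE; split.
    move=> [w [Sw [Bw [Ei Ej]]]]; split; first by apply/(AB d p1 c0); exists w.
    by rewrite Ej Ei; have := Hsum w Sw Bw; lia.
  move=> [/(AB d p1 c0) [w [Sw [Bw Ei]]] ->]; exists w; do 3!(split=> //).
  by rewrite Ei; have := Hsum w Sw Bw; lia.
split.
  move=> f; rewrite IcdE /segprod (seg_gen _ _ _ cK).
  by apply: monogen_ext => i j; rewrite SpG.
move=> i j; split.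
  move=> [Hin Hmin]; move/IcdE: Hin => /mono_in_gen [a [b [[[ad cl] ->] [ai bj]]]].
  case: (eqVneq (a, d - a) (i, j)) => [[ea eb]|ne].
    split; first by rewrite -ea -eb subnKC.
    by apply/(AB d p1 c0); rewrite -ea.
  exfalso; apply: (Hmin a (d - a) ai bj); first by apply/eqP.
  by apply: gen_sub; exists a.
move=> [ij Bi]; have [id cl] := (proj2 (AB d p1 c0 i) Bi).
split.
  by apply: gen_sub; exists i; do 2!(split=> //); rewrite -ij addKn.
move=> i' j' ii jj ne H; move/IcdE: H => /mono_in_gen [a [b [[[ad _] ->] [ai bj]]]].
apply: ne; have : d <= i' + j' by rewrite -(subnKC ad); apply: leq_add.
move=> h; congr pair; lia.
Qed.
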